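(* Let $A$ be a finite set and let $\le_E$ be the ordering on $A^*$ defined below. Then: (1) $(A^*, \le_E)$ has no descending chain and no antichain. (2) $(U(A^*, \le_E), \subseteq)$ has no ascending chain and no antichain.
   Context: $A^* = \bigcup_{n \in \mathbb{N}_0} A^n$ is the set of finite words over $A$. The embedding order $\le_e$ on words over an alphabet is defined by recursion on the length of $x$: the empty word satisfies $\emptyset \le_e y$ for all $y$; if $x = au$ with $a$ a letter and $u$ a word, then $x \le_e y$ iff there are words $v,w$ with $y = vaw$ and $u \le_e w$ (i.e. $x$ is obtained from $y$ by deleting letters). Let $B := (A\times\{0\}) \cup (A \times \{1\})$ and define $\varphi: A^* \to B^*$ by $\varphi(a_1,\dots,a_n) := (b_1,\dots,b_n)$ where $b_i := (a_i,0)$ if $a_i \notin \{a_1,\dots,a_{i-1}\}$ and $b_i := (a_i,1)$ otherwise. For $u = (a_1,\dots,a_n)$ let $S(u) := \{a_1,\dots,a_n\}$. For $u,v \in A^*$, $u \le_E v$ iff $\varphi(u) \le_e \varphi(v)$ and $S(u) = S(v)$. For a partially ordered set $(P,\le)$: a sequence $(a_i)_{i\in\mathbb{N}_0}$ is a descending chain if $a_i > a_{i+1}$ for all $i$, an ascending chain if $a_i < a_{i+1}$ for all $i$, and an antichain if $a_i \le a_j$ implies $i=j$. A subset $U \subseteq P$ is upward closed if $u\in U$, $u \le a$ imply $a \in U$; $U(P,\le)$ denotes the set of upward closed subsets of $P$, ordered by inclusion. *)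

(* Defs.v *)
From mathcomp Require Import all_boot.
Set Implicit Arguments. Unset Strict Implicit. Unset Printing Implicit Defensive.

Fixpoint emb (X : eqType) (x y : seq X) : Prop :=
  match x with
  | [::] => True
  | a :: u => exists v w, y = v ++ a :: w /\ emb u w
  end.

(* B = A x {0,1}; we encode 0 as false and 1 as true. *)
Fixpoint phi_aux (A : eqType) (seen : seq A) (s : seq A) : seq (A * bool) :=
  match s with
  | [::] => [::]
  | a :: t => (a, a \in seen) :: phi_aux (a :: seen) t
  end.

Definition phi (A : eqType) (s : seq A) : seq (A * bool) := phi_aux [::] s.

Definition S (A : finType) (u : seq A) : {set A} := [set a in u].

Definition leE (A : finType) (u v : seq A) : Prop := emb (phi u) (phi v) /\ S u = S v.

Definition descending_chain (P : Type) (le : P -> P -> Prop) (a : nat -> P) : Prop :=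
  forall i, le (a i.+1) (a i) /\ a i.+1 <> a i.
Definition ascending_chain (P : Type) (le : P -> P -> Prop) (a : nat -> P) : Prop :=
  forall i, le (a i) (a i.+1) /\ a i <> a i.+1.
Definition antichain (P : Type) (le : P -> P -> Prop) (a : nat -> P) : Prop :=
  forall i j, le (a i) (a j) -> i = j.

Definition upward_closed (P : Type) (le : P -> P -> Prop) (U : P -> Prop) : Prop :=
  forall u a, U u -> le u a -> U a.

Definition upsets (P : Type) (le : P -> P -> Prop) := {U : P -> Prop | upward_closed le U}.
Definition incl (P : Type) (le : P -> P -> Prop) (X Y : upsets le) : Prop :=
  forall x, proj1_sig X x -> proj1_sig Y x.

(* Main.v *)
Require Import Defs.
From mathcomp Require Import all_boot.
From Stdlib Require ClassicalEpsilon Classical ProofIrrelevance FunctionalExtensionality PropExtensionality.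
Import ClassicalEpsilon.
Set Implicit Arguments. Unset Strict Implicit. Unset Printing Implicit Defensive.

Section Semb.
Variable T : Type.
Variable R : T -> T -> Prop.

Fixpoint semb (x y : seq T) : Prop :=
  match y with
  | [::] => x = [::]
  | b :: y' => semb x y' \/ (match x with [::] => True | a :: x' => R a b /\ semb x' y' end)
  end.

Lemma semb_nil y : semb [::] y.
Proof. by case: y => [|b y] //=; right. Qed.

Lemma semb_cons a b x y : R a b -> semb x y -> semb (a :: x) (b :: y).
Proof. by move=> ? ?; right. Qed.

Lemma semb_catl v x y : semb x y -> semb x (v ++ y).
Proof. elim: v => //= b v IH H; left; exact: IH. Qed.

Lemma semb_size x y : semb x y -> size x <= size y.
Proof.
elim: y x => [|b y IH] x /=; first by move->.
case=> [/IH H|]; first exact: leq_trans H _.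
by case: x => [|a x] //= [_ /IH]; rewrite ltnS.
Qed.

Hypothesis Rtr : forall a b c, R a b -> R b c -> R a c.

Lemma semb_trans x y z : semb x y -> semb y z -> semb x z.
Proof.
elim: z x y => [|c z IH] x y /=.
  by move=> Hxy Hy; subst y; move: Hxy => /=.
move=> Hxy; case=> [Hyz | ].
  by left; apply: IH Hxy Hyz.
move: Hxy; case: y => [|b y] Hxy Hb.
  by move: Hxy => /= ->; right.
case: Hb => Rbc Hyz; move: Hxy => /= [Hxy|].
  by left; apply: IH Hxy Hyz.
case: x => [|a x]; first by move=> _; right.
by case=> Rab Hxy; right; split; [exact: Rtr Rab Rbc | exact: IH Hxy Hyz].
Qed.

End Semb.

Lemma semb_refl (T : Type) (x : seq T) : semb eq x x.
Proof. by elim: x => //= a x IH; right. Qed.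

Lemma semb_eq_trans (T : Type) (x y z : seq T) : semb eq x y -> semb eq y z -> semb eq x z.
Proof. apply: semb_trans; congruence. Qed.

Lemma semb_antisym (T : Type) (x y : seq T) : semb eq x y -> size y <= size x -> x = y.
Proof.
elim: y x => [|b y IH] x /=; first by [].
case=> [/semb_size H|]; first by move=> H'; have := leq_trans H' H; rewrite ltnn.
case: x => [|a x] //= [-> Hxy]; rewrite ltnS => H; by rewrite (IH _ Hxy H).
Qed.

Lemma semb_map_inj (T U : Type) (f : T -> U) (x y : seq T) :
  injective f -> semb eq (map f x) (map f y) -> semb eq x y.
Proof.
move=> finj; elim: y x => [|b y IH] x /=; first by case: x.
case=> [H|]; first by left; apply: IH.
case: x => [|a x] /=; first by move=> _; right.
by case=> /finj -> H; right; split=> //; apply: IH.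
Qed.

Lemma semb_code (X T : Type) (p q : X) (s t : seq T) :
  semb eq (inl p :: map inr s) (inl q :: map inr t) -> p = q /\ semb eq s t.
Proof.
have noinl : forall (z : seq (X + T)) t', semb eq (inl p :: z) (map inr t') -> False.
  move=> z; elim=> [|c t' IH] //= [/IH//|[//]].
case=> [/noinl//|[[->] H]]; split=> //.
by apply: semb_map_inj H => a b [].
Qed.

Lemma emb_semb (X : eqType) (x y : seq X) : emb x y <-> semb eq x y.
Proof.
split.
  elim: x y => [|a x IH] y /=; first by move=> _; apply: semb_nil.
  case=> v [w [-> H]]; apply: semb_catl; right; split=> //; exact: IH.
elim: y x => [|b y IH] x /=; first by move->.
have embr : forall x y, emb x y -> emb x (b :: y).
  case=> [|a x'] y' //= [v [w [-> H]]]; by exists (b :: v), w.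
case=> [/IH H|]; first exact: embr.
case: x => [|a x] //= [-> H]; exists [::], y; split=> //; exact: IH.
Qed.

Definition good (X : Type) (Q : X -> X -> Prop) (f : nat -> X) :=
  exists i j, i < j /\ Q (f i) (f j).
Definition wqo (X : Type) (Q : X -> X -> Prop) := forall f, good Q f.

Lemma wqo_pull (X Y : Type) (Q : Y -> Y -> Prop) (g : X -> Y) :
  wqo Q -> wqo (fun x y => Q (g x) (g y)).
Proof. move=> W f; exact: (W (fun n => g (f n))). Qed.

Lemma wqo_fin (T : finType) : wqo (@eq T).
Proof.
move=> f; apply: Classical_Prop.NNPP => Hng.
have Hb : forall i j, i < j -> f i <> f j by move=> i j lt e; apply: Hng; exists i, j.
pose g (i : 'I_#|T|.+1) := f i.
have ginj : injective g.
  move=> i j; rewrite /g => e; apply/val_inj => /=.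
  case: (ltngtP i j) => // h; [by have := Hb _ _ h e | by have := Hb _ _ h (esym e)].
by have := leq_card _ ginj; rewrite card_ord ltnn.
Qed.

Lemma incr_lt (c : nat -> nat) : (forall k, c k < c k.+1) -> forall k l, k < l -> c k < c l.
Proof.
move=> Hc k; elim=> // l IH; rewrite ltnS leq_eqVlt => /orP[/eqP->|/IH h]; first exact: Hc.
exact: ltn_trans h (Hc l).
Qed.

Lemma wqo_chain (X : Type) (Q : X -> X -> Prop) :
  (forall a b c, Q a b -> Q b c -> Q a c) -> wqo Q -> forall f : nat -> X,
  exists c : nat -> nat, (forall k, c k < c k.+1) /\ forall k l, k < l -> Q (f (c k)) (f (c l)).
Proof.
move=> Qtr W f.
have [N HN] : exists N, forall i, N <= i -> exists j, i < j /\ Q (f i) (f j).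
  apply: Classical_Prop.NNPP => H.
  have H1 : forall N, exists i, N <= i /\ forall j, i < j -> ~ Q (f i) (f j).
    move=> N; apply: Classical_Prop.NNPP => H2; apply: H; exists N => i Ni.
    apply: Classical_Prop.NNPP => H3; apply: H2; exists i; split=> // j ij Qij.
    by apply: H3; exists j.
  pose g N := proj1_sig (constructive_indefinite_description _ (H1 N)).
  have Hg N : N <= g N /\ forall j, g N < j -> ~ Q (f (g N)) (f j).
    exact: (proj2_sig (constructive_indefinite_description _ (H1 N))).
  pose idx := fix idx k := match k with 0 => g 0 | k'.+1 => g (idx k').+1 end.
  have Hi : forall k, idx k < idx k.+1 by move=> k /=; exact: (proj1 (Hg _)).
  have [k [l [kl Q']]] := W (fun k => f (idx k)).
  have := (proj2 (Hg (match k with 0 => 0 | k'.+1 => (idx k').+1 end)) (idx l)).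
  by case: k kl Q' => [|k] kl Q' /(_ (incr_lt Hi kl)); apply.
have H' : forall i, exists j, i < j /\ (N <= i -> Q (f i) (f j)).
  move=> i; case: (leqP N i) => Ni.
    by have [j [ij Qj]] := HN i Ni; exists j.
  by exists i.+1; split=> // /(leq_trans Ni); rewrite ltnn.
pose nx i := proj1_sig (constructive_indefinite_description _ (H' i)).
have Hnx i : i < nx i /\ (N <= i -> Q (f i) (f (nx i))).
  exact: (proj2_sig (constructive_indefinite_description _ (H' i))).
pose c := fix c k := match k with 0 => N | k'.+1 => nx (c k') end.
have Hc : forall k, c k < c k.+1 by move=> k; exact: (proj1 (Hnx _)).
have cN : forall k, N <= c k.
  elim=> // k IH; exact: leq_trans IH (ltnW (Hc k)).
exists c; split=> // k; elim=> // l IH; rewrite ltnS leq_eqVlt => /orP[/eqP->|/IH h].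
  exact: (proj2 (Hnx _) (cN _)).
exact: Qtr h (proj2 (Hnx _) (cN l)).
Qed.

Lemma ex_min_size (T : Type) (P : seq T -> Prop) :
  (exists w, P w) -> exists w, P w /\ forall w', P w' -> size w <= size w'.
Proof.
move=> [w0 Pw0]; apply: Classical_Prop.NNPP => H.
suff: forall n w, size w <= n -> ~ P w by move/(_ _ w0 (leqnn _)).
elim=> [|n IH] w sw Pw; apply: H; exists w; split=> // w' Pw';
  apply: Classical_Prop.NNPP => /negP; rewrite -ltnNge => lt.
  by have := leq_trans lt sw.
by apply: (IH w') => //; rewrite -ltnS; exact: leq_trans lt sw.
Qed.

Section Higman.
Variable T : Type.
Variable R : T -> T -> Prop.
Hypothesis Rtr : forall a b c, R a b -> R b c -> R a c.
Hypothesis Rw : wqo R.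

Definition bad (g : nat -> seq T) := forall i j, i < j -> ~ semb R (g i) (g j).
Definition ext (pre : seq (seq T)) :=
  exists g, bad g /\ forall i, i < size pre -> g i = nth [::] pre i.

Definition nextw (pre : seq (seq T)) : seq T :=
  epsilon (inhabits [::]) (fun w => ext (rcons pre w) /\ forall w', ext (rcons pre w') -> size w <= size w').

Fixpoint pres (n : nat) : seq (seq T) :=
  match n with 0 => [::] | n'.+1 => rcons (pres n') (nextw (pres n')) end.

Definition mbs n := nextw (pres n).

Lemma size_pres n : size (pres n) = n.
Proof. by elim: n => //= n IH; rewrite size_rcons IH. Qed.

Lemma nth_pres n i : i < n -> nth [::] (pres n) i = mbs i.
Proof.
elim: n => // n IH; rewrite ltnS leq_eqVlt => /orP[/eqP->|lt] /=.
  by rewrite nth_rcons size_pres ltnn eqxx.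
by rewrite nth_rcons size_pres lt; apply: IH.
Qed.

Lemma ext_next pre : ext pre ->
  ext (rcons pre (nextw pre)) /\ forall w', ext (rcons pre w') -> size (nextw pre) <= size w'.
Proof.
move=> [g [bg Hg]].
have := epsilon_spec (inhabits [::]) (fun w => ext (rcons pre w) /\ forall w', ext (rcons pre w') -> size w <= size w').
apply; apply: (@ex_min_size _ (fun w => ext (rcons pre w))).
exists (g (size pre)), g; split=> // i; rewrite size_rcons ltnS leq_eqVlt nth_rcons.
case/orP=> [/eqP->|lt]; first by rewrite ltnn eqxx.
by rewrite lt; apply: Hg.
Qed.

Lemma ext_pres : ext [::] -> forall n, ext (pres n).
Proof. move=> H0; elim=> //= n IH; exact: (proj1 (ext_next IH)). Qed.

Theorem higman : wqo (semb R).
Proof.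
move=> f; apply: Classical_Prop.NNPP => Hng.
have bf : bad f by move=> i j lt H; apply: Hng; exists i, j.
have E0 : ext [::] by exists f.
have Ep := ext_pres E0.
have bm : bad mbs.
  move=> i j lt.
  have [g [bg Hg]] := proj1 (ext_next (Ep j)).
  have Hgi k : k <= j -> g k = mbs k.
    move=> kj; rewrite Hg; last by rewrite size_rcons size_pres ltnS.
    rewrite nth_rcons size_pres; case: (ltngtP k j) kj => // [kj _ | -> _].
      by apply: nth_pres.
    by [].
  by rewrite -!Hgi //; [apply: bg | apply: ltnW].
have minm : forall n g, bad g -> (forall i, i < n -> g i = mbs i) -> size (mbs n) <= size (g n).
  move=> n g bg Hg; apply: (proj2 (ext_next (Ep n)) (g n)); exists g; split=> // i.
  rewrite size_rcons size_pres ltnS leq_eqVlt nth_rcons size_pres.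
  case/orP=> [/eqP->|lt]; first by rewrite ltnn eqxx.
  by rewrite lt nth_pres // Hg.
have nz : forall n, mbs n <> [::].
  by move=> n e; apply: (bm n n.+1 (ltnSn n)); rewrite e; apply: semb_nil.
have [a0 _] : exists a0 : T, True.
  by case E: (mbs 0) (nz 0) => [|a s] // _; exists a.
pose h n := head a0 (mbs n).
pose t n := behead (mbs n).
have mht : forall n, mbs n = h n :: t n.
  by move=> n; rewrite /h /t; case: (mbs n) (nz n).
have [c [Hc Rc]] := wqo_chain Rtr Rw h.
have cinc := incr_lt Hc.
have c0 : forall k, c 0 <= c k by case=> // k; apply: ltnW; apply: cinc.
pose q i := if i < c 0 then mbs i else t (c (i - c 0)).
have bq : bad q.
  move=> i j ij; rewrite /q.
  case: ifP => ic; case: ifP => jc.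
  - exact: bm.
  - move=> H; apply: (bm i (c (j - c 0))); first exact: leq_trans ic (c0 _).
    by rewrite (mht (c (j - c 0))) /=; left.
  - by have := ltn_trans ij jc; rewrite ic.
  - move=> H; have kl : i - c 0 < j - c 0.
      by rewrite ltn_sub2rE // leqNgt ic.
    apply: (bm _ _ (cinc _ _ kl)); rewrite (mht (c (i - c 0))) (mht (c (j - c 0))).
    by right; split=> //; apply: Rc.
have := minm (c 0) q bq.
rewrite /q ltnn subnn (mht (c 0)) /= ltnn.
by move=> H; suff: false by []; apply: H => i ic; rewrite ic.
Qed.

End Higman.

Definition pb (P : Prop) : bool := if excluded_middle_informative P then true else false.
Lemma pbP (P : Prop) : pb P <-> P.
Proof. by rewrite /pb; case: excluded_middle_informative. Qed.

Section Lang.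
Variable B : finType.
Definition atom := ({set B} + B)%type.

Definition inA (e : atom) (w : seq B) : Prop :=
  match e with inl G => all (fun b => b \in G) w | inr a => w = [::] \/ w = [:: a] end.

Fixpoint Lang (s : seq atom) (w : seq B) : Prop :=
  match s with
  | [::] => w = [::]
  | e :: s' => exists u v, w = u ++ v /\ inA e u /\ Lang s' v
  end.

Lemma inA_nil e : inA e [::].
Proof. by case: e => //= ?; left. Qed.

Lemma Lang_nil s : Lang s [::].
Proof. by elim: s => //= e s IH; exists [::], [::]; split=> //; split=> //; apply: inA_nil. Qed.

Lemma Lang_mono s t w : semb eq s t -> Lang s w -> Lang t w.
Proof.
elim: t s w => [|e t IH] s w /=; first by move->.
case=> [H L|].
  by exists [::], w; split=> //; split; [apply: inA_nil | exact: IH H L].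
case: s => [|a s] /=; first by move=> _ ->; exact: (Lang_nil (e :: t)).
by case=> -> H [u [v [-> [iu L]]]]; exists u, v; split=> //; split=> //; exact: IH H L.
Qed.

Definition downset (D : seq B -> Prop) := forall x y, semb eq x y -> D y -> D x.
Definition Rep (D : seq B -> Prop) :=
  exists F : seq (seq atom), forall w, D w <-> exists2 s, s \in F & Lang s w.

Lemma split_delta (G : {set B}) (w : seq B) :
  all (fun b => b \in G) w \/ exists u x v, w = u ++ x :: v /\ all (fun b => b \in G) u /\ x \notin G.
Proof.
elim: w => [|b w IH]; first by left.
case: (boolP (b \in G)) => bG.
  case: IH => [H|[u [x [v [-> [Hu Hx]]]]]]; first by left; rewrite /= bG.
  by right; exists (b :: u), x, v; rewrite /= bG.
by right; exists [::], b, w.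
Qed.

Lemma step (D : seq B -> Prop) : downset D -> ~ Rep D ->
  exists x, ~ Rep (fun w => D (x :: w)) /\ exists w, D w /\ ~ D (x :: w).
Proof.
move=> dD nR; apply: Classical_Prop.NNPP => H; apply: nR.
have Hx : forall x, ~ (forall w, D w -> D (x :: w)) -> Rep (fun w => D (x :: w)).
  move=> x h; apply: Classical_Prop.NNPP => hr; apply: H; exists x; split=> //.
  apply: Classical_Prop.NNPP => hw; apply: h => w Dw; apply: Classical_Prop.NNPP => nD.
  by apply: hw; exists w.
case: (Classical_Prop.classic (D [::])) => D0; last first.
  exists [::] => w; split=> [Dw|[s]]; last by rewrite in_nil.
  by exfalso; apply: D0; apply: dD Dw; apply: semb_nil.
pose Dl := [set x | pb (forall w, D w -> D (x :: w))].
have prep : forall u v, all (fun b => b \in Dl) u -> D v -> D (u ++ v).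
  elim=> // x u IH v /= /andP[xD uD] Dv; rewrite inE in xD.
  by apply: (proj1 (pbP _) xD); apply: IH.
pose Fx (x : B) := epsilon (inhabits [::])
   (fun F : seq (seq atom) => forall w, D (x :: w) <-> exists2 s, s \in F & Lang s w).
have HFx : forall x, x \notin Dl -> forall w, D (x :: w) <-> exists2 s, s \in Fx x & Lang s w.
  move=> x xD; rewrite /Fx.
  have := epsilon_spec (inhabits [::])
   (fun F : seq (seq atom) => forall w, D (x :: w) <-> exists2 s, s \in F & Lang s w).
  apply; apply: Hx => h; move: xD; rewrite inE; case/negP; exact/pbP.
exists ([:: [:: inl Dl]] ++ flatten [seq [seq inl Dl :: inr x :: s | s <- Fx x] | x <- enum (~: Dl)]).
move=> w; split.
  move=> Dw; case: (split_delta Dl w) => [H1|[u [x [v [ew [Hu Hx']]]]]].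
    exists [:: inl Dl]; first by rewrite mem_cat mem_head.
    by exists w, [::]; rewrite cats0.
  have Dxv : D (x :: v) by apply: dD Dw; rewrite ew; apply: semb_catl; apply: semb_refl.
  have [s sF Ls] := proj1 (HFx x Hx' v) Dxv.
  exists (inl Dl :: inr x :: s).
    rewrite mem_cat; apply/orP; right; apply/flatten_mapP; exists x.
      by rewrite mem_enum inE.
    by apply/mapP; exists s.
  exists u, (x :: v); split=> //; split=> //.
  by exists [:: x], v; split=> //; split=> //; right.
case=> s; rewrite mem_cat => /orP[|].
  rewrite inE => /eqP -> /= [u [v [-> [Hu ->]]]]; by apply: prep.
move=> /flatten_mapP [x]; rewrite mem_enum inE => xD /mapP [s' s'F ->].
move=> /= [u [v [-> [Hu [p [q [-> [Hp Lq]]]]]]]].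
apply: prep => //.
have Dxq : D (x :: q) by apply/(HFx x xD); exists s'.
case: Hp => -> //=.
by apply: dD Dxq; left; apply: semb_refl.
Qed.

Theorem rep_all (D : seq B -> Prop) : downset D -> Rep D.
Proof.
move=> dD; apply: Classical_Prop.NNPP => nR.
have [x0 _] := step dD nR.
pose P (E : seq B -> Prop) := fun x => ~ Rep (fun w => E (x :: w)) /\ exists w, E w /\ ~ E (x :: w).
pose stepf (E : seq B -> Prop) := fun w => E (epsilon (inhabits x0) (P E) :: w).
pose Ds n := iter n stepf D.
have inv : forall n, downset (Ds n) /\ ~ Rep (Ds n).
  elim=> [|n [dn rn]]; first by [].
  have := epsilon_spec (inhabits x0) (P (Ds n)) (step dn rn).
  case=> rn' _; split=> //.
  move=> a b ab /=; rewrite /stepf; apply: dn; by right.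
have sub : forall n w, Ds n.+1 w -> Ds n w.
  move=> n w H; apply: (proj1 (inv n)) H; by left; apply: semb_refl.
have wit : forall n, exists w, Ds n w /\ ~ Ds n.+1 w.
  move=> n; have [dn rn] := inv n.
  have := epsilon_spec (inhabits x0) (P (Ds n)) (step dn rn).
  by case.
pose w n := epsilon (inhabits [::]) (fun w => Ds n w /\ ~ Ds n.+1 w).
have Hw : forall n, Ds n (w n) /\ ~ Ds n.+1 (w n).
  move=> n; exact: (epsilon_spec (inhabits [::]) (fun w => Ds n w /\ ~ Ds n.+1 w) (wit n)).
have subs : forall i j v, i <= j -> Ds j v -> Ds i v.
  move=> i j v; elim: j => [|j IH]; first by rewrite leqn0 => /eqP->.
  rewrite leq_eqVlt => /orP[/eqP->//|]; rewrite ltnS => ij H; apply: IH => //; exact: sub.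
have [i [j [ij Hij]]] := higman (fun a b c (e1 : a = b) (e2 : b = c) => etrans e1 e2) (@wqo_fin B) w.
apply: (proj2 (Hw i)); apply: ((proj1 (inv i.+1)) (w i) (w j) Hij).
apply: subs ij (proj1 (Hw j)).
Qed.

End Lang.

Lemma hoare (T : eqType) (Q : T -> T -> Prop) (F G : seq T) :
  semb Q F G -> forall p, p \in F -> exists2 q, q \in G & Q p q.
Proof.
elim: G F => [|b G IH] F /=; first by move=> -> p; rewrite in_nil.
case=> [/IH H p /H [q qG Qpq]|]; first by exists q => //; rewrite inE qG orbT.
case: F => [|a F]; first by move=> _ p; rewrite in_nil.
case=> Qab H p; rewrite inE => /orP[/eqP->|pF]; first by exists b => //; rewrite mem_head.
by have [q qG Qpq] := IH _ H p pF; exists q => //; rewrite inE qG orbT.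
Qed.

Lemma phi_aux_fst (X : eqType) (seen s : seq X) : map fst (phi_aux seen s) = s.
Proof. by elim: s seen => //= a s IH seen; rewrite IH. Qed.

Lemma phi_inj (X : eqType) (u v : seq X) : phi u = phi v -> u = v.
Proof. by move=> e; rewrite -(phi_aux_fst [::] u) -(phi_aux_fst [::] v); exact: (congr1 (map fst) e). Qed.

Section Main.
Variable A : finType.

Lemma leE_trans (u v w : seq A) : leE u v -> leE v w -> leE u w.
Proof.
case=> /emb_semb H1 e1 [/emb_semb H2 e2]; split; last by rewrite e1.
apply/emb_semb; exact: semb_eq_trans H1 H2.
Qed.

Lemma leE_antisym (u v : seq A) : leE u v -> leE v u -> u = v.
Proof.
case=> /emb_semb H1 _ [/emb_semb H2 _]; apply: phi_inj; apply: semb_antisym H1 _.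
exact: semb_size H2.
Qed.

Lemma eq_tr (T : Type) (a b c : T) : a = b -> b = c -> a = c.
Proof. exact: etrans. Qed.

Lemma leE_good (a : nat -> seq A) : exists i j, i < j /\ leE (a i) (a j).
Proof.
pose code1 (u : seq A) : seq ({set A} + (A * bool)) := inl (S u) :: map inr (phi u).
have W := wqo_pull code1 (higman (@eq_tr _) (@wqo_fin _)).
have [i [j [ij H]]] := W a.
exists i, j; split=> //; have [e H'] := semb_code H.
by split=> //; apply/emb_semb.
Qed.

Local Notation B := (A * bool)%type.

Definition DUX (U : seq A -> Prop) (X : {set A}) : seq B -> Prop :=
  fun w => exists u, ~ U u /\ S u = X /\ semb eq w (phi u).

Lemma DUX_down U X : downset (DUX U X).
Proof.
move=> x y xy [u [nU [e H]]]; exists u; split=> //; split=> //; exact: semb_eq_trans xy H.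
Qed.

Definition FX U X := epsilon (inhabits [::])
  (fun F : seq (seq (atom B)) => forall w, DUX U X w <-> exists2 s, s \in F & Lang s w).

Lemma HFX U X : forall w, DUX U X w <-> exists2 s, s \in FX U X & Lang s w.
Proof.
have := epsilon_spec (inhabits [::])
  (fun F : seq (seq (atom B)) => forall w, DUX U X w <-> exists2 s, s \in F & Lang s w)
  (rep_all (@DUX_down U X)).
by [].
Qed.

Definition FU U : seq ({set A} * seq (atom B)) :=
  flatten [seq [seq (X, s) | s <- FX U X] | X <- enum {set A}].

Lemma FU_out U u : ~ U u -> exists s, (S u, s) \in FU U /\ Lang s (phi u).
Proof.
move=> nU.
have [s sF Ls] := proj1 (HFX U (S u) (phi u)) (ex_intro _ u (conj nU (conj erefl (semb_refl _)))).
exists s; split=> //; apply/flatten_mapP; exists (S u); first by rewrite mem_enum.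
by apply/mapP; exists s.
Qed.

Lemma FU_in U X s u : upward_closed (@leE A) U -> (X, s) \in FU U -> Lang s (phi u) -> S u = X -> ~ U u.
Proof.
move=> Uc /flatten_mapP [Y _ /mapP [s' s'F [e1 e2]]] Ls eS Uu; subst Y s'.
have [u' [nU' [eS' H]]] := proj2 (HFX U X (phi u)) (ex_intro2 _ _ s s'F Ls).
apply: nU'; apply: (Uc u u' Uu); split; first exact/emb_semb.
by rewrite eS eS'.
Qed.

Definition code2 (p : {set A} * seq (atom B)) : seq ({set A} + atom B) := inl p.1 :: map inr p.2.
Definition Rp p q := semb eq (code2 p) (code2 q).

Lemma upsets_good (Us : nat -> upsets (@leE A)) :
  exists i j, i < j /\ incl (Us j) (Us i).
Proof.
have Rptr : forall a b c, Rp a b -> Rp b c -> Rp a c.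
  by move=> a b c; apply: semb_eq_trans.
have W : wqo Rp := wqo_pull code2 (higman (@eq_tr _) (@wqo_fin _)).
have [i [j [ij H]]] := higman Rptr W (fun n => FU (proj1_sig (Us n))).
exists i, j; split=> // u Uju.
apply: Classical_Prop.NNPP => nUi.
have [s [sF Ls]] := FU_out nUi.
have [[Y t] qG Rq] := hoare H sF.
have [eY st] := semb_code Rq.
apply: (FU_in (proj2_sig (Us j)) qG (Lang_mono st Ls) eY) Uju.
Qed.

End Main.

Lemma sig_eq (X : Type) (Q : X -> Prop) (a b : {x | Q x}) : proj1_sig a = proj1_sig b -> a = b.
Proof.
case: a b => [x hx] [y hy] /= e; subst y; f_equal; apply: ProofIrrelevance.proof_irrelevance.
Qed.

Theorem theorem1p3 (A : finType) :
  ((~ exists a : nat -> seq A, descending_chain (@leE A) a) /\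
   (~ exists a : nat -> seq A, antichain (@leE A) a)) /\
  ((~ exists U : nat -> upsets (@leE A), ascending_chain (@incl _ (@leE A)) U) /\
   (~ exists U : nat -> upsets (@leE A), antichain (@incl _ (@leE A)) U)).
Proof.
split; split.
- case=> a Ha.
  have [i [j [ij Hij]]] := leE_good a.
  have H1 : forall k, i < k -> leE (a k) (a i.+1).
    elim=> // k IH; rewrite ltnS leq_eqVlt => /orP[/eqP->|lt].
      split; [exact/emb_semb/semb_refl | by []].
    exact: leE_trans (proj1 (Ha k)) (IH lt).
  apply: (proj2 (Ha i)); apply: (leE_antisym (proj1 (Ha i))).
  exact: leE_trans Hij (H1 _ ij).
- case=> a Ha.
  have [i [j [ij Hij]]] := leE_good a.
  by have := Ha _ _ Hij => e; rewrite e ltnn in ij.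
- case=> U HU.
  have [i [j [ij Hij]]] := upsets_good U.
  have H1 : forall k, i < k -> incl (U i.+1) (U k).
    elim=> // k IH; rewrite ltnS leq_eqVlt => /orP[/eqP->|lt]; first by move=> x.
    move=> x hx; apply: (proj1 (HU k)); exact: IH.
  apply: (proj2 (HU i)); apply: sig_eq.
  apply: FunctionalExtensionality.functional_extensionality => x.
  apply: PropExtensionality.propositional_extensionality; split.
    exact: (proj1 (HU i)).
  by move=> hx; apply: Hij; apply: H1.
- case=> U HU.
  have [i [j [ij Hij]]] := upsets_good U.
  by have := HU _ _ Hij => e; rewrite e ltnn in ij.
Qed.
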